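(* For every multi-type resource allocation problem and every profile $R$ of strict linear orders over bundles, the assignment $\mathrm{MPS}(R)$ is lexi-efficient.
   Context: Setting: $N=\{1,\dots,n\}$ agents; $M=D_1\cup\dots\cup D_p$ items with pairwise disjoint types, $|D_i|=n$, unit supply; bundles $\mathcal D=D_1\times\dots\times D_p$; each agent $j$ has a strict linear order $\succ_j$ on $\mathcal D$. An assignment is an $n\times|\mathcal D|$ matrix $(p_{j,x})$ with entries in $[0,1]$, rows summing to $1$, and $\sum_j\sum_{x\ni o}p_{j,x}=1$ for every item $o$. Lexicographic dominance: allocation $p$ lexicographically dominates $q$ w.r.t. $\succ$ if there is a bundle $x$ with $p_x>q_x$ and $p_y\ge q_y$ for all $y\succ x$. $P$ is lexi-efficient if there is no assignment $Q$ such that $Q_j$ lexicographically dominates $P_j$ w.r.t. $\succ_j$ for every agent $j$. MPS (multi-type probabilistic serial): items start with supply $1$. A bundle is available if all its items have positive remaining supply. Continuously in time, each agent eats her $\succ_j$-most-preferred available bundle at rate $1$, which means each item of that bundle is consumed at rate $1$ by her and $p_{j,x}$ grows at rate $1$; when an item's supply reaches $0$, it is exhausted and every bundle containing it becomes unavailable, and agents switch to their next most preferred available bundle. The process ends when all items are exhausted (at time $1$); the accumulated matrix $(p_{j,x})$ is $\mathrm{MPS}(R)$. *)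

(* Defs.v *)
From HB Require Import structures.
From mathcomp Require Import all_boot all_order all_algebra.
From mathcomp Require Import reals.
Set Implicit Arguments. Unset Strict Implicit. Unset Printing Implicit Defensive.
Import Order.TTheory GRing.Theory Num.Theory.
Local Open Scope ring_scope.

Section MPS.
Variables (R : realType) (n p : nat).

(* agents are 'I_n; types are 'I_p; type D_i consists of the n items (i, k),
   k : 'I_n; items of different types are distinct by construction. *)
Definition item := ('I_p * 'I_n)%type.
(* a bundle picks one item of each type: x i is the index of its item of type i *)
Definition bundle := {ffun 'I_p -> 'I_n}.
Definition in_bundle (o : item) (x : bundle) : bool := x o.1 == o.2.

Definition assignment := 'I_n -> bundle -> R.

Definition is_assignment (P : assignment) : Prop :=
  [/\ (forall j x, 0 <= P j x <= 1),
      (forall j, \sum_(x : bundle) P j x = 1) &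
      (forall o : item, \sum_(j < n) \sum_(x : bundle | in_bundle o x) P j x = 1)].

(* succ x y  means  x is strictly preferred to y *)
Definition strict_linear_order (T : finType) (succ : rel T) : Prop :=
  [/\ irreflexive succ, transitive succ & forall x y, x != y -> succ x y || succ y x].

Definition lexi_dominates (succ : rel bundle) (pa qa : bundle -> R) : Prop :=
  exists x, qa x < pa x /\ forall y, succ y x -> qa y <= pa y.

Definition lexi_efficient (succ : 'I_n -> rel bundle) (P : assignment) : Prop :=
  ~ exists Q : assignment, is_assignment Q /\
      forall j, lexi_dominates (succ j) (Q j) (P j).

Variable succ : 'I_n -> rel bundle.

Definition available (s : item -> R) (x : bundle) : bool :=
  [forall i, 0 < s (i, x i)].

Definition choice (s : item -> R) (j : 'I_n) : option bundle :=
  [pick x | available s x &&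
            [forall y, (available s y && (y != x)) ==> succ j x y]].

Definition rate (s : item -> R) (o : item) : nat :=
  count (fun j => if choice s j is Some x then in_bundle o x else false)
        (enum 'I_n).

(* length of the current phase: time until the next item is exhausted *)
Definition phase_length (s : item -> R) : R :=
  let ratios := [seq s o / (rate s o)%:R | o <- enum {: item} & (0 < rate s o)%N] in
  if ratios is r :: rs then foldr Num.min r rs else 0.

Definition mps_step (st : (item -> R) * assignment) : (item -> R) * assignment :=
  let: (s, P) := st in
  let d := phase_length s in
  ((fun o => s o - (rate s o)%:R * d),
   (fun j x => P j x + (if choice s j == Some x then d else 0))).

(* Each productive phase exhausts at least one item, so after #items = n*p
   phases all items are exhausted; further phases are no-ops. *)
Definition MPS : assignment :=
  (iter (n * p).+1 mps_step ((fun _ => 1), (fun _ _ => 0))).2.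

End MPS.

(* Main.v *)
Require Import Defs.
From HB Require Import structures.
From mathcomp Require Import all_boot all_order all_algebra.
From mathcomp Require Import reals.
From mathcomp Require Import lra.
Import Order.TTheory GRing.Theory Num.Theory.
Local Open Scope ring_scope.

Section Proof.
Variables (R : realType) (n p : nat) (succ : 'I_n -> rel (bundle n p)).
Hypothesis hsucc : forall j, strict_linear_order (succ j).

Local Notation item := (item n p).
Local Notation bundle := (bundle n p).

Lemma foldr_min_le (r : R) rs x : x \in r :: rs -> foldr Num.min r rs <= x.
Proof.
elim: rs r x => [|a rs IH] r x /=; first by rewrite inE => /eqP ->.
rewrite !inE ge_min => /or3P[/eqP->|/eqP->|Hx].
- apply/orP; right; have := IH r r; rewrite inE eqxx; exact.
- by rewrite lexx.
- apply/orP; right; apply: IH; by rewrite inE Hx orbT.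
Qed.

Lemma foldr_min_mem (r : R) rs : foldr Num.min r rs \in r :: rs.
Proof.
elim: rs r => [|a rs IH] r /=; first by rewrite inE.
rewrite /Num.min; case: ifP => _; first by rewrite !inE eqxx orbT.
move: (IH r); rewrite !inE => /orP[->|->]; by rewrite ?orbT.
Qed.

Lemma choiceP (s : item -> R) j y : choice succ s j = Some y ->
  available s y /\ forall z, available s z -> z != y -> succ j y z.
Proof.
rewrite /choice; case: pickP => // y' /andP[Ha /forallP H] [<-]; split => // z Hz Hzy.
by have := H z; rewrite Hz Hzy.
Qed.

Lemma choice_exists (s : item -> R) j x : available s x -> exists y, choice succ s j = Some y.
Proof.
move=> Hx; rewrite /choice; case: pickP => [y _|H]; first by exists y.
exfalso.
pose cnt y := #|[pred z | available s z && succ j z y]|.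
case: (arg_minnP cnt Hx) => y Hy Hmin.
have := H y; rewrite Hy /=; move/negP; apply; apply/forallP => z.
apply/implyP => /andP[Hz Hzy].
have [Hirr Htr Htot] := hsucc j.
case/orP: (Htot _ _ Hzy) => // Hzy'.
suff : (cnt z < cnt y)%N by rewrite ltnNge Hmin.
apply: proper_card; apply/properP; split.
- apply/subsetP => w; rewrite !inE => /andP[Hw Hwz]; by rewrite Hw (Htr _ _ _ Hwz Hzy').
- by exists z; rewrite !inE ?Hz ?Hzy' ?Hirr.
Qed.

Lemma rate_pos (s : item -> R) o : (0 < rate succ s o)%N -> 0 < s o.
Proof.
rewrite /rate -has_count => /hasP[k _].
case E: (choice succ s k) => [x|] // Hin.
have [/forallP Hav _] := choiceP _ _ _ E.
move: Hin (Hav o.1); rewrite /in_bundle; case: o => i k0 /= /eqP -> //.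
Qed.

Lemma pl_ge0 (s : item -> R) : 0 <= phase_length succ s.
Proof.
rewrite /phase_length /=.
have Hpos : forall x, x \in [seq s o / (rate succ s o)%:R | o <- enum {: item} & (0 < rate succ s o)%N] -> 0 < x.
  move=> x /mapP[o]; rewrite mem_filter => /andP[Hr _] ->.
  by apply: divr_gt0; [exact: rate_pos | rewrite ltr0n].
move: Hpos; case: [seq _ | _ <- _ & _] => [//|r rs] Hpos.
by apply/ltW/Hpos/foldr_min_mem.
Qed.

Lemma pl_le (s : item -> R) o : (0 < rate succ s o)%N -> phase_length succ s <= s o / (rate succ s o)%:R.
Proof.
move=> Hr.
have Ho : s o / (rate succ s o)%:R \in [seq s o / (rate succ s o)%:R | o <- enum {: item} & (0 < rate succ s o)%N].
  by apply: map_f; rewrite mem_filter Hr mem_enum.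
move: Ho; rewrite /phase_length /=; case: [seq _ | _ <- _ & _] => [//|r rs] Ho.
exact: foldr_min_le.
Qed.

Lemma pl_attained (s : item -> R) o : (0 < rate succ s o)%N ->
  exists2 o0, (0 < rate succ s o0)%N & phase_length succ s = s o0 / (rate succ s o0)%:R.
Proof.
move=> Hr.
have Ho : s o / (rate succ s o)%:R \in [seq s o / (rate succ s o)%:R | o <- enum {: item} & (0 < rate succ s o)%N].
  by apply: map_f; rewrite mem_filter Hr mem_enum.
have : phase_length succ s \in [seq s o / (rate succ s o)%:R | o <- enum {: item} & (0 < rate succ s o)%N].
  move: Ho; rewrite /phase_length /=; case: [seq _ | _ <- _ & _] => [//|r rs] Ho.
  exact: foldr_min_mem.
move=> /mapP[o0]; rewrite mem_filter => /andP[H0 _] ->; by exists o0.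
Qed.


Lemma mps_stepE (st : (item -> R) * assignment R n p) : mps_step succ st =
  ((fun o => st.1 o - (rate succ st.1 o)%:R * phase_length succ st.1),
   (fun j x => st.2 j x + (if choice succ st.1 j == Some x then phase_length succ st.1 else 0))).
Proof. by case: st. Qed.

Definition init : (item -> R) * assignment R n p := ((fun _ => 1), (fun _ _ => 0)).
Definition st t := iter t (mps_step succ) init.
Definition sp t := (st t).1.
Definition dl t := phase_length succ (sp t).

Lemma dl_ge0 t : 0 <= dl t.
Proof. exact: pl_ge0. Qed.

Lemma sS t o : sp t.+1 o = sp t o - (rate succ (sp t) o)%:R * dl t.
Proof. by rewrite /sp /st iterS mps_stepE. Qed.

Lemma P_sum t j x : (st t).2 j x =
  \sum_(u < t) (if choice succ (sp u) j == Some x then dl u else 0).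
Proof.
elim: t => [|t IH]; first by rewrite big_ord0.
by rewrite big_ord_recr /= -IH mps_stepE.
Qed.

Lemma s_cons t o : sp t o = 1 - \sum_(u < t) (rate succ (sp u) o)%:R * dl u.
Proof.
elim: t => [|t IH]; first by rewrite big_ord0 subr0.
by rewrite sS IH big_ord_recr /= opprD addrA.
Qed.

Lemma s_mono t o : sp t.+1 o <= sp t o.
Proof.
rewrite sS lerBlDr lerDl; apply: mulr_ge0 => //; exact: dl_ge0.
Qed.

Lemma s_monoT t1 t2 o : (t1 <= t2)%N -> sp t2 o <= sp t1 o.
Proof.
elim: t2 => [|t2 IH]; first by rewrite leqn0 => /eqP ->.
rewrite leq_eqVlt => /orP[/eqP -> //|H].
exact: le_trans (s_mono _ _) (IH H).
Qed.

Lemma avail_mono t1 t2 x : (t1 <= t2)%N -> available (sp t2) x -> available (sp t1) x.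
Proof.
move=> H /forallP Hx; apply/forallP => i.
exact: lt_le_trans (Hx i) (s_monoT _ _ _ H).
Qed.


Lemma rate_sum (s : item -> R) o (d : R) : (rate succ s o)%:R * d =
  \sum_(k < n) \sum_(y | in_bundle o y) (if choice succ s k == Some y then d else 0).
Proof.
rewrite /rate -sum1_count big_enum_cond natr_sum mulr_suml big_mkcond /=.
apply: eq_bigr => k _.
case E: (choice succ s k) => [x|] /=.
- case H: (in_bundle o x).
  + rewrite mul1r (bigD1 x) //= eqxx big1 ?addr0 // => y /andP[_ Hy].
    by case: eqP => // -[Hxy]; move: Hy; rewrite Hxy eqxx.
  + rewrite big1 // => y Hy; case: eqP => // -[Hxy]; by move: H; rewrite Hxy Hy.
- by rewrite big1 // => y _.
Qed.


Lemma exhaust (hn : (0 < n)%N) (hp : (0 < p)%N) x : ~~ available (sp (n * p).+1) x.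
Proof.
apply/negP => Hx.
pose E t := [set o : item | sp t o <= 0].
have prod : forall t, (t < (n * p).+1)%N -> (#|E t| < #|E t.+1|)%N.
  move=> t Ht; have Hxt := avail_mono _ _ _ (ltnW Ht) Hx.
  have [y Hy] := choice_exists (sp t) (Ordinal hn) _ Hxt.
  pose o : item := (Ordinal hp, y (Ordinal hp)).
  have Hr : (0 < rate succ (sp t) o)%N.
    rewrite /rate -has_count; apply/hasP; exists (Ordinal hn); first by rewrite mem_enum.
    by rewrite Hy /in_bundle eqxx.
  have [o0 Hr0 Hd] := pl_attained _ _ Hr.
  apply: proper_card; apply/properP; split.
  - apply/subsetP => o'; rewrite !inE => H; exact: le_trans (s_mono _ _) H.
  - exists o0; rewrite !inE.
    + rewrite sS /dl Hd mulrC divfK ?subrr // pnatr_eq0 -lt0n; exact: Hr0.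
    + rewrite -ltNge; exact: rate_pos.
have Hc : forall t, (t <= (n * p).+1)%N -> (t <= #|E t|)%N.
  elim => // t IH Ht; exact: leq_ltn_trans (IH (ltnW Ht)) (prod t Ht).
have := Hc _ (leqnn _); have := max_card (mem (E (n * p).+1)).
rewrite card_prod !card_ord mulnC => H1 H2.
by have := leq_trans H2 H1; rewrite ltnn.
Qed.


Lemma sum_ord_mono (F : nat -> R) T N : (forall u, 0 <= F u) -> (T <= N)%N ->
  \sum_(u < T) F u <= \sum_(u < N) F u.
Proof.
move=> F0; elim: N => [|N IH]; first by rewrite leqn0 => /eqP ->.
rewrite leq_eqVlt => /orP[/eqP -> //|H].
rewrite big_ord_recr /=; apply: le_trans (IH H) _; by rewrite lerDl.
Qed.

Lemma sum_lt (I : finType) (P : pred I) (F G : I -> R) i0 :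
  (forall i, P i -> F i <= G i) -> P i0 -> F i0 < G i0 ->
  \sum_(i | P i) F i < \sum_(i | P i) G i.
Proof.
move=> H Pi0 Hi0; rewrite (bigD1 i0) //= [X in _ < X](bigD1 i0) //=.
apply: ltr_leD => //; apply: ler_sum => i /andP[Pi _]; exact: H.
Qed.

Lemma main_lemma (hn : (0 < n)%N) (hp : (0 < p)%N) : lexi_efficient succ (MPS R succ).
Proof.
move=> [Q [[HQ01 HQrow HQcol] Hdom]].
pose P := MPS R succ.
have PE : forall j x, P j x = \sum_(u < (n * p).+1)
    (if choice succ (sp u) j == Some x then dl u else 0).
  move=> j x; exact: (P_sum (n * p).+1 j x).
have Hx : forall j, exists x, (P j x < Q j x) &&
    [forall y, succ j y x ==> (P j y <= Q j y)].
  move=> j; have [x [H1 H2]] := Hdom j; exists x; rewrite H1 /=.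
  apply/forallP => y; apply/implyP; exact: H2.
pose xf j := xchoose (Hx j).
have Hxf : forall j, P j (xf j) < Q j (xf j) /\ forall y, succ j y (xf j) -> P j y <= Q j y.
  move=> j; have /andP[H1 /forallP H2] := xchooseP (Hx j); split => // y.
  by move/implyP: (H2 y).
have exT : forall k, exists t, ~~ available (sp t) (xf k).
  by move=> k; exists (n * p).+1; exact: exhaust.
pose tau k := ex_minn (exT k).
have tauP : forall k, ~~ available (sp (tau k)) (xf k) /\
    forall t, ~~ available (sp t) (xf k) -> (tau k <= t)%N.
  by move=> k; rewrite /tau; case: ex_minnP => m Hm Hmin; split.
pose js := [arg min_(k < Ordinal hn) tau k].
have Hjs : forall k, (tau js <= tau k)%N.
  by rewrite /js; case: arg_minnP => // j _ H k; exact: H.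
have HT : (tau js <= (n * p).+1)%N by apply: (tauP js).2; exact: exhaust.
have Hav : forall k (u : nat), (u < tau js)%N -> available (sp u) (xf k).
  move=> k u Hu; apply/negPn/negP => H.
  have := leq_trans (Hjs k) ((tauP k).2 _ H); by rewrite leqNgt Hu.
move: (tauP js).1 => /forallPn [i Hi].
pose o : item := (i, xf js i).
have Hle : 1 <= \sum_(u < tau js) (rate succ (sp u) o)%:R * dl u.
  by move: Hi; rewrite s_cons -leNgt subr_le0.
pose F k y (u : nat) := if choice succ (sp u) k == Some y then dl u else 0.
have E1 : \sum_(u < tau js) (rate succ (sp u) o)%:R * dl u =
   \sum_(k < n) \sum_(y | in_bundle o y && ((y == xf k) || succ k y (xf k)))
       \sum_(u < tau js) F k y u.
  under eq_bigr do rewrite rate_sum.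
  rewrite exchange_big /=; apply: eq_bigr => k _.
  rewrite exchange_big /= (bigID (fun y => (y == xf k) || succ k y (xf k))) /=.
  rewrite [X in _ + X]big1 ?addr0 // => y /andP[_ Hy]; apply: big1 => u _.
  rewrite /F; case: eqP => // Hc.
  have [_ Hbest] := choiceP _ _ _ Hc.
  have Havu := Hav k u (ltn_ord u).
  case: (eqVneq (xf k) y) => Exy.
  - by move: Hy; rewrite Exy eqxx.
  - by move: Hy; rewrite (Hbest _ Havu Exy) orbT.
have Hgood : forall k y, in_bundle o y && ((y == xf k) || succ k y (xf k)) -> P k y <= Q k y.
  move=> k y /andP[_ /orP[/eqP ->|Hs]]; first exact/ltW/(Hxf k).1.
  exact: (Hxf k).2.
have : \sum_(k < n) \sum_(y | in_bundle o y && ((y == xf k) || succ k y (xf k))) P k y <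
       \sum_(k < n) \sum_(y | in_bundle o y && ((y == xf k) || succ k y (xf k))) Q k y.
  apply: (sum_lt _ _ _ _ js) => // [k _|]; first by apply: ler_sum => y; exact: Hgood.
  apply: (sum_lt _ _ _ _ (xf js)); first exact: Hgood.
  - by rewrite /in_bundle /= eqxx eqxx.
  - exact: (Hxf js).1.
have : \sum_(k < n) \sum_(y | in_bundle o y && ((y == xf k) || succ k y (xf k))) Q k y <= 1.
  rewrite -(HQcol o); apply: ler_sum => k _.
  rewrite [X in _ <= X](bigID (fun y => (y == xf k) || succ k y (xf k))) /= lerDl.
  apply: sumr_ge0 => y _; by have /andP[] := HQ01 k y.
have : \sum_(u < tau js) (rate succ (sp u) o)%:R * dl u <=
   \sum_(k < n) \sum_(y | in_bundle o y && ((y == xf k) || succ k y (xf k))) P k y.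
  rewrite E1; apply: ler_sum => k _; apply: ler_sum => y _; rewrite PE.
  apply: (sum_ord_mono (F k y)) => // u; rewrite /F; case: eqP => _ //; exact: dl_ge0.
move=> H1 H2 H3.
have := le_lt_trans (le_trans Hle H1) (lt_le_trans H3 H2); by rewrite ltxx.
Qed.

End Proof.

Theorem theorem4 (R : realType) (n p : nat) (hn : (0 < n)%N) (hp : (0 < p)%N)
    (succ : 'I_n -> rel (bundle n p))
    (hsucc : forall j, strict_linear_order (succ j)) :
  lexi_efficient succ (MPS R succ).
Proof. exact: (main_lemma _ _ _ _ hsucc hn hp). Qed.
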